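(* Let $\mathbb{T}$ be a time scale, let $f:\mathbb{T}\to\mathbb{R}$, let $t\in\mathbb{T}^{\kappa}$ and let $\alpha\in(0,1]$. Then: (i) If $f$ is continuous at $t$ and $t$ is right-scattered, then $f$ is delta differentiable of order $\alpha$ at $t$ and $$f^{\Delta^{\alpha}}(t)=\frac{f^{\alpha}(\sigma(t))-f^{\alpha}(t)}{\sigma^{\alpha}(t)-t^{\alpha}}.$$ (ii) If $t$ is right-dense, then $f$ is delta differentiable of order $\alpha$ at $t$ if and only if the limit $\lim_{s\to t,\, s\in\mathbb{T}}\frac{f^{\alpha}(t)-f^{\alpha}(s)}{t^{\alpha}-s^{\alpha}}$ exists as a finite number, and in this case $$f^{\Delta^{\alpha}}(t)=\lim_{s\to t}\frac{f^{\alpha}(t)-f^{\alpha}(s)}{t^{\alpha}-s^{\alpha}}.$$ (iii) If $f$ is delta differentiable of order $\alpha$ at $t$, then $$f^{\alpha}(\sigma(t))=f^{\alpha}(t)+\bigl(\sigma(t)^{\alpha}-t^{\alpha}\bigr)f^{\Delta^{\alpha}}(t).$$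
   Context: A time scale $\mathbb{T}$ is a nonempty closed subset of $\mathbb{R}$. The forward jump operator is $\sigma(t)=\inf\{s\in\mathbb{T}:s>t\}$ and the backward jump operator is $\rho(t)=\sup\{s\in\mathbb{T}:s<t\}$. A point $t$ is right-scattered if $\sigma(t)>t$, and right-dense if $t<\sup\mathbb{T}$ and $\sigma(t)=t$. If $\mathbb{T}$ has a left-scattered maximum $m$ (i.e. $\rho(m)<m$), then $\mathbb{T}^{\kappa}=\mathbb{T}\setminus\{m\}$; otherwise $\mathbb{T}^{\kappa}=\mathbb{T}$. For a real-valued $f$, $f^{\alpha}$ denotes the pointwise power $(f(\cdot))^{\alpha}$, $\sigma^{\alpha}(t)=\sigma(t)^{\alpha}$, and powers of real numbers (possibly negative) are taken as complex numbers, so these quantities may be complex. Definition: for $\alpha\in(0,1]$ and $t\in\mathbb{T}^{\kappa}$, $f$ is delta differentiable of order $\alpha$ at $t$ with delta derivative of order $\alpha$ equal to the (complex) number $f^{\Delta^{\alpha}}(t)$ if for every $\epsilon>0$ there is $\delta>0$ such that, with $U=(t-\delta,t+\delta)\cap\mathbb{T}$, $$\bigl|[f^{\alpha}(\sigma(t))-f^{\alpha}(s)]-f^{\Delta^{\alpha}}(t)[\sigma(t)^{\alpha}-s^{\alpha}]\bigr|\le\epsilon\,|\sigma(t)^{\alpha}-s^{\alpha}|\quad\text{for all } s\in U.$$ *)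

(* Defs.v *)
From Stdlib Require Import Reals Lra ClassicalEpsilon.
From Coquelicot Require Import Coquelicot.
Open Scope R_scope.

(* Principal-branch complex power of a real number x, for a real exponent a:
   x^a = exp(a ln x)            if x > 0,
   0^a = 0                      (a > 0 in all uses),
   x^a = |x|^a e^{i pi a}       if x < 0. *)
Definition rpowC (x a : R) : C :=
  if Rlt_dec 0 x then RtoC (Rpower x a)
  else if Req_EM_T x 0 then RtoC 0
  else (Rpower (- x) a * cos (PI * a), Rpower (- x) a * sin (PI * a)).

Definition time_scale (T : R -> Prop) : Prop := (exists t, T t) /\ closed T.

(* Forward jump: sigma t = inf {s in T | s > t}, with inf of the empty set = t
   (standard convention inf emptyset = sup T, and then t = max T). *)
Definition fwd_jump (T : R -> Prop) (t : R) : R :=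
  match excluded_middle_informative (exists s, T s /\ t < s) with
  | left _ => real (Glb_Rbar (fun s => T s /\ t < s))
  | right _ => t
  end.

Definition bwd_jump (T : R -> Prop) (t : R) : R :=
  match excluded_middle_informative (exists s, T s /\ s < t) with
  | left _ => real (Lub_Rbar (fun s => T s /\ s < t))
  | right _ => t
  end.

Definition right_scattered (T : R -> Prop) (t : R) : Prop := t < fwd_jump T t.

Definition right_dense (T : R -> Prop) (t : R) : Prop :=
  Rbar_lt (Finite t) (Lub_Rbar T) /\ fwd_jump T t = t.

Definition left_scattered_max (T : R -> Prop) (m : R) : Prop :=
  T m /\ (forall s, T s -> s <= m) /\ bwd_jump T m < m.

Definition in_Tkappa (T : R -> Prop) (t : R) : Prop :=
  T t /\ ~ left_scattered_max T t.

Definition delta_diff_alpha (T : R -> Prop) (alpha : R) (f : R -> R) (t : R)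
  (D : C) : Prop :=
  forall eps : R, 0 < eps -> exists delta : R, 0 < delta /\
    forall s : R, T s -> Rabs (s - t) < delta ->
      Cmod (Cminus (Cminus (rpowC (f (fwd_jump T t)) alpha) (rpowC (f s) alpha))
                   (Cmult D (Cminus (rpowC (fwd_jump T t) alpha) (rpowC s alpha))))
      <= eps * Cmod (Cminus (rpowC (fwd_jump T t) alpha) (rpowC s alpha)).

(* Main.v *)
Require Import Defs.
From Stdlib Require Import Reals Lra ClassicalEpsilon.
From Coquelicot Require Import Coquelicot.
Open Scope R_scope.

Lemma Rpower_pos x a : 0 < Rpower x a.
Proof. unfold Rpower; apply exp_pos. Qed.

Lemma Rpower_inj x y a : 0 < x -> 0 < y -> a <> 0 -> Rpower x a = Rpower y a -> x = y.
Proof.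
  intros Hx Hy Ha H. unfold Rpower in H. apply exp_inv in H.
  apply ln_inv; auto. apply (Rmult_eq_reg_l a); auto.
Qed.

Lemma sin_cos_a a : 0 < a <= 1 -> 0 <= sin (PI * a) /\ cos (PI * a) < 1.
Proof.
  intros Ha. pose proof PI_RGT_0. split.
  - apply sin_ge_0; nra.
  - rewrite <- cos_0. apply cos_decreasing_1; nra.
Qed.

Lemma rpowC_pos_neg x y a : 0 < a <= 1 -> 0 < x -> y < 0 -> rpowC x a <> rpowC y a.
Proof.
  intros Ha Hx Hy H. unfold rpowC in H.
  destruct (Rlt_dec 0 x); [|lra]. destruct (Rlt_dec 0 y); [lra|].
  destruct (Req_EM_T y 0); [lra|]. injection H as H1 H2.
  pose proof (Rpower_pos x a). pose proof (Rpower_pos (-y) a).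
  destruct (sin_cos_a a Ha) as [_ Hc].
  destruct (Rle_lt_dec 1 a).
  - assert (a = 1) by lra. subst a. rewrite Rmult_1_r, cos_PI in H1. nra.
  - assert (0 < sin (PI * a)) by (apply sin_gt_0; pose proof PI_RGT_0; nra). nra.
Qed.

Lemma rpowC_zero_neg y a : 0 < a <= 1 -> y < 0 -> rpowC 0 a <> rpowC y a.
Proof.
  intros Ha Hy H. unfold rpowC in H.
  destruct (Rlt_dec 0 0); [lra|]. destruct (Req_EM_T 0 0); [|lra].
  destruct (Rlt_dec 0 y); [lra|].
  destruct (Req_EM_T y 0); [lra|]. injection H as H1 H2.
  pose proof (Rpower_pos (-y) a). pose proof (sin2_cos2 (PI * a)). unfold Rsqr in *.
  assert (cos (PI*a) = 0) by nra. assert (sin (PI*a) = 0) by nra. nra.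
Qed.

Lemma rpowC_zero_pos y a : 0 < y -> rpowC 0 a <> rpowC y a.
Proof.
  intros Hy H. unfold rpowC in H.
  destruct (Rlt_dec 0 0); [lra|]. destruct (Req_EM_T 0 0); [|lra].
  destruct (Rlt_dec 0 y); [|lra]. injection H as H1. pose proof (Rpower_pos y a). lra.
Qed.

Lemma rpowC_inj x y a : 0 < a <= 1 -> rpowC x a = rpowC y a -> x = y.
Proof.
  intros Ha H.
  destruct (Rtotal_order x 0) as [Hx|[Hx|Hx]]; destruct (Rtotal_order y 0) as [Hy|[Hy|Hy]];
    try subst x; try subst y; auto.
  - unfold rpowC in H. destruct (Rlt_dec 0 x); [lra|]. destruct (Rlt_dec 0 y); [lra|].
    destruct (Req_EM_T x 0); [lra|]. destruct (Req_EM_T y 0); [lra|].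
    injection H as H1 H2. pose proof (sin2_cos2 (PI * a)). unfold Rsqr in *.
    assert (E: (Rpower (-x) a - Rpower (-y) a) * (Rpower (-x) a - Rpower (-y) a) *
      (sin (PI*a) * sin (PI*a) + cos (PI*a) * cos (PI*a)) = 0).
    { replace (_ * _ * _) with ((Rpower (-x) a * sin (PI*a) - Rpower (-y) a * sin (PI*a))^2
        + (Rpower (-x) a * cos (PI*a) - Rpower (-y) a * cos (PI*a))^2) by ring.
      rewrite H1, H2. ring. }
    rewrite H in E. assert (Hp: Rpower (-x) a = Rpower (-y) a) by nra.
    apply Rpower_inj in Hp; lra.
  - exfalso; apply (rpowC_zero_neg x a Ha Hx); auto.
  - exfalso; apply (rpowC_pos_neg y x a Ha Hy Hx); auto.
  - exfalso; apply (rpowC_zero_neg y a Ha Hy); auto.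
  - exfalso; apply (rpowC_zero_pos y a Hy); auto.
  - exfalso; apply (rpowC_pos_neg x y a Ha Hx Hy); auto.
  - exfalso; apply (rpowC_zero_pos x a Hx); auto.
  - unfold rpowC in H. destruct (Rlt_dec 0 x); [|lra]. destruct (Rlt_dec 0 y); [|lra].
    injection H as H1. apply Rpower_inj in H1; lra.
Qed.
Lemma Rpower_cont_pos y0 a : 0 < y0 -> forall e, 0 < e -> exists d, 0 < d /\
  forall y, Rabs (y - y0) < d -> Rabs (Rpower y a - Rpower y0 a) < e.
Proof.
  intros Hy e He.
  assert (Hc : continuity_pt (fun x => Rpower x a) y0).
  { apply derivable_continuous_pt. exists (a * Rpower y0 (a - 1)).
    apply derivable_pt_lim_power; auto. }
  destruct (Hc e He) as [d [Hd H]]. exists d; split; auto.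
  intros y Hy'. destruct (Req_dec y y0) as [->|Hne].
  - rewrite Rminus_eq_0, Rabs_R0; auto.
  - apply (H y). split. split; auto. exact I. simpl. unfold R_dist. auto.
Qed.

Lemma Rpower_cont_0 a : 0 < a -> forall e, 0 < e -> exists d, 0 < d /\
  forall y, 0 < y -> y < d -> Rpower y a < e.
Proof.
  intros Ha e He. exists (Rpower e (/ a)). split. apply Rpower_pos.
  intros y Hy Hyd. replace e with (Rpower (Rpower e (/a)) a).
  - apply Rlt_Rpower_l; auto.
  - rewrite Rpower_mult, Rinv_l, Rpower_1; auto; lra.
Qed.

Lemma Cmod_cs p q c s : s * s + c * c = 1 ->
  Cmod (Cminus (p * c, p * s) (q * c, q * s)) = Rabs (p - q).
Proof.
  intros H. unfold Cmod, Cminus, Cplus, Copp; simpl.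
  rewrite <- sqrt_Rsqr_abs. f_equal. unfold Rsqr.
  transitivity ((p - q) * (p - q) * (s * s + c * c)). ring. rewrite H. ring.
Qed.

Lemma Cmod_RR u v : Cmod (Cminus (RtoC u) (RtoC v)) = Rabs (u - v).
Proof.
  replace (Cminus (RtoC u) (RtoC v)) with (RtoC (u - v)).
  apply Cmod_R. unfold Cminus, Cplus, Copp, RtoC; simpl. f_equal; ring.
Qed.

Lemma scq a : sin (PI * a) * sin (PI * a) + cos (PI * a) * cos (PI * a) = 1.
Proof. pose proof (sin2_cos2 (PI * a)). unfold Rsqr in *. lra. Qed.

Lemma rpowC_cont a : 0 < a -> forall x0 e, 0 < e -> exists d, 0 < d /\
  forall x, Rabs (x - x0) < d -> Cmod (Cminus (rpowC x a) (rpowC x0 a)) < e.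
Proof.
  intros Ha x0 e He.
  destruct (Rtotal_order x0 0) as [Hx|[Hx|Hx]].
  - destruct (Rpower_cont_pos (- x0) a ltac:(lra) e He) as [d [Hd H]].
    exists (Rmin d (- x0)). split. apply Rmin_pos; lra.
    intros x Hxd. pose proof (Rmin_l d (-x0)). pose proof (Rmin_r d (-x0)).
    assert (x < 0) by (apply Rabs_def2 in Hxd; lra).
    unfold rpowC. destruct (Rlt_dec 0 x); [lra|]. destruct (Rlt_dec 0 x0); [lra|].
    destruct (Req_EM_T x 0); [lra|]. destruct (Req_EM_T x0 0); [lra|].
    rewrite Cmod_cs by apply scq. apply H.
    replace (- x - - x0) with (- (x - x0)) by ring. rewrite Rabs_Ropp. lra.
  - subst x0. destruct (Rpower_cont_0 a Ha e He) as [d [Hd H]].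
    exists d. split; auto. intros x Hxd. rewrite Rminus_0_r in Hxd.
    unfold rpowC at 2. destruct (Rlt_dec 0 0); [lra|]. destruct (Req_EM_T 0 0); [|lra].
    unfold rpowC. destruct (Rlt_dec 0 x).
    + rewrite Cmod_RR, Rminus_0_r, Rabs_pos_eq. apply H; auto. rewrite Rabs_pos_eq in Hxd; lra.
      left; apply Rpower_pos.
    + destruct (Req_EM_T x 0).
      * rewrite Cmod_RR, Rminus_0_r, Rabs_R0. auto.
      * replace (RtoC 0) with ((0 * cos (PI * a), 0 * sin (PI * a)) : C)
          by (unfold RtoC; f_equal; ring).
        rewrite Cmod_cs by apply scq. rewrite Rminus_0_r, Rabs_pos_eq.
        apply H. lra. rewrite Rabs_left in Hxd; lra. left; apply Rpower_pos.
  - destruct (Rpower_cont_pos x0 a Hx e He) as [d [Hd H]].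
    exists (Rmin d x0). split. apply Rmin_pos; lra.
    intros x Hxd. pose proof (Rmin_l d x0). pose proof (Rmin_r d x0).
    assert (0 < x) by (apply Rabs_def2 in Hxd; lra).
    unfold rpowC. destruct (Rlt_dec 0 x); [|lra]. destruct (Rlt_dec 0 x0); [|lra].
    rewrite Cmod_RR. apply H. lra.
Qed.

Lemma Cminus_eq0 (x y : C) : Cminus x y = RtoC 0 -> x = y.
Proof. intros H. replace x with (Cplus (Cminus x y) y) by ring. rewrite H. ring. Qed.

Lemma rpowC_neq a x y : 0 < a <= 1 -> x <> y -> Cminus (rpowC x a) (rpowC y a) <> RtoC 0.
Proof. intros Ha Hne H. apply Cminus_eq0, rpowC_inj in H; auto. Qed.

Lemma Cmod_pos_neq (z : C) : z <> RtoC 0 -> 0 < Cmod z.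
Proof.
  intros H. destruct (Cmod_ge_0 z) as [|H0]; auto. exfalso. apply H.
  apply Cmod_eq_0; auto.
Qed.

Lemma kid (w z D : C) : z <> RtoC 0 ->
  Cmod (Cminus w (Cmult D z)) = Cmod (Cminus (Cdiv w z) D) * Cmod z.
Proof.
  intros Hz. rewrite <- Cmod_mult. f_equal. field. auto.
Qed.

Lemma within_R (T : R -> Prop) t (P : R -> Prop) :
  within T (locally t) P <-> exists d, 0 < d /\ forall s, T s -> Rabs (s - t) < d -> P s.
Proof.
  split.
  - intros [eps H]. exists eps. split. apply cond_pos. intros s Hs Hd. apply H; auto.
  - intros [d [Hd H]]. exists (mkposreal d Hd). intros y Hy HTy. apply H; auto.
Qed.

Lemma lim_C (E : R -> Prop) t (q : R -> C) L :
  filterlim q (within E (locally t)) (locally L) <->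
  forall eps, 0 < eps -> exists d, 0 < d /\ forall s, E s -> Rabs (s - t) < d ->
     Cmod (Cminus (q s) L) < eps.
Proof.
  rewrite filterlim_locally_ball_norm. split.
  - intros H eps He. apply (within_R E t (fun s => _)). exact (H (mkposreal eps He)).
  - intros H eps. apply (within_R E t (fun s => _)). apply (H eps (cond_pos eps)).
Qed.

Lemma rd_points (T : R -> Prop) t : right_dense T t ->
  forall eps, 0 < eps -> exists s, T s /\ t < s /\ s < t + eps.
Proof.
  intros [Hlub Hfj] eps He.
  assert (Hex : exists s, T s /\ t < s).
  { apply NNPP. intros Hn.
    assert (Hub : is_ub_Rbar T t).
    { intros x Hx. simpl. apply Rnot_lt_le. intros Hlt. apply Hn. eauto. }
    pose proof (Lub_Rbar_correct T) as [_ Hl]. specialize (Hl _ Hub).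
    destruct (Lub_Rbar T); simpl in *; lra. }
  unfold fwd_jump in Hfj.
  destruct (excluded_middle_informative (exists s, T s /\ t < s)) as [_|Hn]; [|tauto].
  apply NNPP. intros Hn.
  destruct Hex as [s0 [Hs0 Hts0]].
  pose proof (Glb_Rbar_correct (fun s => T s /\ t < s)) as [Hlb Hg].
  assert (Hlb2 : is_lb_Rbar (fun s => T s /\ t < s) (t + eps)).
  { intros x [Hx Htx]. simpl. apply Rnot_lt_le. intros Hlt. apply Hn. exists x; auto. }
  specialize (Hg _ Hlb2). specialize (Hlb s0 (conj Hs0 Hts0)).
  destruct (Glb_Rbar (fun s => T s /\ t < s)); simpl in *; lra.
Qed.

Section Q.
Variables (T : R -> Prop) (f : R -> R) (t a : R).
Let q s := Cdiv (Cminus (rpowC (f t) a) (rpowC (f s) a)) (Cminus (rpowC t a) (rpowC s a)).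

Lemma diff_lim D : fwd_jump T t = t -> 0 < a <= 1 -> delta_diff_alpha T a f t D ->
  filterlim q (within (fun s => T s /\ s <> t) (locally t)) (locally D).
Proof.
  intros Hfj Ha HD. apply lim_C. intros eps He.
  destruct (HD (eps / 2)) as [d [Hd H]]. lra. exists d. split; auto.
  intros s [Ts Hst] Hsd. specialize (H s Ts Hsd). rewrite Hfj in H.
  assert (Hz := rpowC_neq a t s Ha (not_eq_sym Hst)).
  rewrite kid in H by auto. pose proof (Cmod_pos_neq _ Hz). unfold q.
  assert (Cmod (Cminus (Cdiv (Cminus (rpowC (f t) a) (rpowC (f s) a))
     (Cminus (rpowC t a) (rpowC s a))) D) <= eps / 2).
  { apply (Rmult_le_reg_r (Cmod (Cminus (rpowC t a) (rpowC s a)))); auto. }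
  lra.
Qed.

Lemma lim_diff L : fwd_jump T t = t -> 0 < a <= 1 ->
  filterlim q (within (fun s => T s /\ s <> t) (locally t)) (locally L) ->
  delta_diff_alpha T a f t L.
Proof.
  intros Hfj Ha HL. rewrite lim_C in HL. intros eps He.
  destruct (HL eps He) as [d [Hd H]]. exists d. split; auto.
  intros s Ts Hsd. rewrite Hfj. destruct (Req_dec s t) as [->|Hst].
  - replace (Cminus (Cminus (rpowC (f t) a) (rpowC (f t) a))
      (Cmult L (Cminus (rpowC t a) (rpowC t a)))) with (RtoC 0) by ring.
    replace (Cminus (rpowC t a) (rpowC t a)) with (RtoC 0) by ring.
    rewrite Cmod_0. lra.
  - assert (Hz := rpowC_neq a t s Ha (not_eq_sym Hst)).
    rewrite kid by auto. pose proof (Cmod_pos_neq _ Hz).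
    specialize (H s (conj Ts Hst) Hsd). unfold q in H.
    apply Rmult_le_compat_r; lra.
Qed.
End Q.

Lemma part3 T a f t D : T t -> delta_diff_alpha T a f t D ->
  rpowC (f (fwd_jump T t)) a =
  Cplus (rpowC (f t) a) (Cmult (Cminus (rpowC (fwd_jump T t) a) (rpowC t a)) D).
Proof.
  intros Tt HD.
  set (X := Cminus (Cminus (rpowC (f (fwd_jump T t)) a) (rpowC (f t) a))
     (Cmult D (Cminus (rpowC (fwd_jump T t) a) (rpowC t a)))).
  set (K := Cmod (Cminus (rpowC (fwd_jump T t) a) (rpowC t a))).
  assert (HX : X = RtoC 0).
  { apply Cmod_eq_0. destruct (Cmod_ge_0 X) as [Hp|Hp]; [|auto]. exfalso.
    pose proof (Cmod_ge_0 (Cminus (rpowC (fwd_jump T t) a) (rpowC t a))) as HK.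
    destruct (HD (Cmod X / (2 * (K + 1)))) as [d [Hd H]].
    { apply Rdiv_lt_0_compat; unfold K in *; lra. }
    specialize (H t Tt ltac:(rewrite Rminus_eq_0, Rabs_R0; lra)).
    fold X K in H.
    assert (Cmod X / (2 * (K + 1)) * K < Cmod X).
    { unfold Rdiv. rewrite Rmult_assoc.
      assert (/ (2 * (K + 1)) * K < 1).
      { apply (Rmult_lt_reg_l (2 * (K+1))). unfold K in *; lra.
        rewrite <- Rmult_assoc, Rinv_r, Rmult_1_l, Rmult_1_r; unfold K in *; lra. }
      nra. }
    lra. }
  replace (rpowC (f (fwd_jump T t)) a) with
    (Cplus X (Cplus (rpowC (f t) a) (Cmult (Cminus (rpowC (fwd_jump T t) a) (rpowC t a)) D)))
    by (unfold X; ring).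
  rewrite HX. ring.
Qed.

Lemma part1 (T : R -> Prop) a (f : R -> R) t : 0 < a <= 1 ->
  filterlim f (within T (locally t)) (locally (f t)) -> t < fwd_jump T t ->
  delta_diff_alpha T a f t
      (Cdiv (Cminus (rpowC (f (fwd_jump T t)) a) (rpowC (f t) a))
            (Cminus (rpowC (fwd_jump T t) a) (rpowC t a))).
Proof.
  intros Ha Hf Hrs. set (sg := fwd_jump T t) in *.
  set (A := rpowC (f sg) a). set (B := rpowC (f t) a).
  set (P := rpowC sg a). set (Q := rpowC t a).
  assert (HZ : Cminus P Q <> RtoC 0) by (apply rpowC_neq; auto; lra).
  set (D0 := Cdiv (Cminus A B) (Cminus P Q)).
  set (K := Cmod (Cminus P Q)). set (M := Cmod D0).
  assert (HK : 0 < K) by (apply Cmod_pos_neq; auto).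
  assert (HM : 0 <= M) by apply Cmod_ge_0.
  intros eps He.
  set (eta := eps * K / (1 + M + eps)).
  assert (Heta : 0 < eta) by (unfold eta; apply Rdiv_lt_0_compat; nra).
  assert (Heta2 : eta * (1 + M + eps) = eps * K) by (unfold eta; field; lra).
  destruct (rpowC_cont a ltac:(lra) t eta Heta) as [d1 [Hd1 H1]].
  destruct (rpowC_cont a ltac:(lra) (f t) eta Heta) as [d2 [Hd2 H2]].
  rewrite filterlim_locally in Hf.
  destruct (proj1 (within_R T t _) (Hf (mkposreal d2 Hd2))) as [d3 [Hd3 H3]].
  exists (Rmin d1 d3). split. apply Rmin_pos; auto.
  intros s Ts Hs. pose proof (Rmin_l d1 d3). pose proof (Rmin_r d1 d3).
  assert (HS : Cmod (Cminus (rpowC s a) Q) < eta) by (apply H1; lra).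
  assert (HF : Cmod (Cminus (rpowC (f s) a) B) < eta).
  { apply H2. specialize (H3 s Ts ltac:(lra)). exact H3. }
  change (fwd_jump T t) with sg. fold A P.
  replace (Cminus (Cminus A (rpowC (f s) a)) (Cmult D0 (Cminus P (rpowC s a)))) with
    (Cplus (Copp (Cminus (rpowC (f s) a) B)) (Cmult D0 (Cminus (rpowC s a) Q)))
    by (unfold D0; field; auto).
  assert (HP : K <= Cmod (Cminus P (rpowC s a)) + Cmod (Cminus (rpowC s a) Q)).
  { unfold K. replace (Cminus P Q) with (Cplus (Cminus P (rpowC s a)) (Cminus (rpowC s a) Q))
      by ring. apply Cmod_triangle. }
  eapply Rle_trans. apply Cmod_triangle.
  rewrite Cmod_opp, Cmod_mult. fold M.
  assert (M * Cmod (Cminus (rpowC s a) Q) <= M * eta) by (apply Rmult_le_compat_l; lra).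
  assert (eps * (K - eta) <= eps * Cmod (Cminus P (rpowC s a))) by (apply Rmult_le_compat_l; lra).
  nra.
Qed.

Theorem theorem1 (T : R -> Prop) (f : R -> R) (t alpha : R) :
  time_scale T -> in_Tkappa T t -> 0 < alpha <= 1 ->
  (* (i) *)
  ((filterlim f (within T (locally t)) (locally (f t)) -> right_scattered T t ->
    delta_diff_alpha T alpha f t
      (Cdiv (Cminus (rpowC (f (fwd_jump T t)) alpha) (rpowC (f t) alpha))
            (Cminus (rpowC (fwd_jump T t) alpha) (rpowC t alpha))))
  /\
  (* (ii) *)
  (right_dense T t ->
    ((exists D : C, delta_diff_alpha T alpha f t D) <->
     (exists L : C,
        filterlim (fun s => Cdiv (Cminus (rpowC (f t) alpha) (rpowC (f s) alpha))
                                 (Cminus (rpowC t alpha) (rpowC s alpha)))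
                  (within (fun s => T s /\ s <> t) (locally t)) (locally L)))
    /\
    (forall D L : C, delta_diff_alpha T alpha f t D ->
        filterlim (fun s => Cdiv (Cminus (rpowC (f t) alpha) (rpowC (f s) alpha))
                                 (Cminus (rpowC t alpha) (rpowC s alpha)))
                  (within (fun s => T s /\ s <> t) (locally t)) (locally L) ->
        D = L))
  /\
  (* (iii) *)
  (forall D : C, delta_diff_alpha T alpha f t D ->
     rpowC (f (fwd_jump T t)) alpha =
     Cplus (rpowC (f t) alpha)
           (Cmult (Cminus (rpowC (fwd_jump T t) alpha) (rpowC t alpha)) D))).
Proof.
  intros HT [Tt Hk] Ha. split; [|split].
  - intros Hf Hrs. apply part1; auto.
  - intros Hrd. assert (Hfj : fwd_jump T t = t) by apply Hrd. split; [split|].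
    + intros [D HD]. exists D. apply diff_lim; auto.
    + intros [L HL]. exists L. apply lim_diff; auto.
    + intros D L HD HL.
      assert (HD' := diff_lim T f t alpha D Hfj Ha HD).
      rewrite lim_C in HD', HL.
      apply Cminus_eq0, Cmod_eq_0.
      destruct (Cmod_ge_0 (Cminus D L)) as [Hp|Hp]; [|auto]. exfalso.
      set (e := Cmod (Cminus D L) / 3).
      assert (He : 0 < e) by (unfold e; lra).
      destruct (HD' e He) as [d1 [Hd1 H1]]. destruct (HL e He) as [d2 [Hd2 H2]].
      destruct (rd_points T t Hrd (Rmin d1 d2) ltac:(apply Rmin_pos; auto)) as [s [Ts [Hs1 Hs2]]].
      pose proof (Rmin_l d1 d2). pose proof (Rmin_r d1 d2).
      assert (Hst : s <> t) by lra.
      assert (Ha1 : Rabs (s - t) < d1) by (rewrite Rabs_pos_eq; lra).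
      assert (Ha2 : Rabs (s - t) < d2) by (rewrite Rabs_pos_eq; lra).
      specialize (H1 s (conj Ts Hst) Ha1). specialize (H2 s (conj Ts Hst) Ha2).
      set (qs := Cdiv (Cminus (rpowC (f t) alpha) (rpowC (f s) alpha))
                  (Cminus (rpowC t alpha) (rpowC s alpha))) in *.
      assert (Cmod (Cminus D L) <= Cmod (Cminus qs L) + Cmod (Cminus qs D)).
      { replace (Cminus D L) with (Cplus (Cminus qs L) (Copp (Cminus qs D))) by ring.
        rewrite <- (Cmod_opp (Cminus qs D)). apply Cmod_triangle. }
      unfold e in *. lra.
  - intros D HD. apply part3; auto.
Qed.
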